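(* Let $\Omega=(0,1)\times(0,1)\subset\mathbb{R}^2$ and let $h:[0,1]\to\mathbb{R}$ be a bounded function with $h(0)=0$, $h(x_1)>0$ for $x_1\in(0,1]$, $h\in C^1(0,1]$, and suppose there exist constants $C>0$ and $\theta\in(0,1)$ such that $$\sup_{x\in\Omega,\ 0<r\le d}\frac{\int_{B(x,r)\cap\Omega}h(x_1)^{-1}\,dx}{|B(x,r)\cap\Omega|^{\theta}}\le C,$$ where $d$ is the diameter of $\Omega$. Then $\mathcal{H}_h^1(\Omega)$ is continuously embedded into $W^{1,1}(\Omega)$.
   Context: $B(x,r)$ is the Euclidean ball with center $x$ and radius $r$, $|\cdot|$ is Lebesgue measure. $\mathcal{H}_h^1(\Omega)=\{u\in L^2(\Omega)\mid \partial_{x_1}u\in L^2(\Omega),\ \sqrt{h(x_1)}\,\partial_{x_2}u\in L^2(\Omega)\}$ (distributional derivatives), with norm $\|u\|_{\mathcal{H}_h^1(\Omega)}=\big(\|u\|_{L^2(\Omega)}^2+\|\partial_{x_1}u\|_{L^2(\Omega)}^2+\|\sqrt{h(x_1)}\partial_{x_2}u\|_{L^2(\Omega)}^2\big)^{1/2}$. *)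

(* Defs.v *)
From HB Require Import structures.
From mathcomp Require Import all_boot all_order all_algebra.
From mathcomp Require Import all_classical all_reals all_analysis.
Set Implicit Arguments. Unset Strict Implicit. Unset Printing Implicit Defensive.
Import Order.TTheory GRing.Theory Num.Theory.
Import numFieldNormedType.Exports.
Local Open Scope classical_set_scope.
Local Open Scope ring_scope.

Section Defs.
Variable R : realType.

Definition leb2 := ((@lebesgue_measure R) \x (@lebesgue_measure R))%E.

Definition Omega : set (R * R) := `]0, 1[%classic `*` `]0, 1[%classic.

Definition eball (x : R * R) (r : R) : set (R * R) :=
  [set y | (y.1 - x.1) ^+ 2 + (y.2 - x.2) ^+ 2 < r ^+ 2].

Definition diamOmega : R := Num.sqrt 2.

Definition pd1 (f : R * R -> R) : R * R -> R :=
  fun z => derive1 (fun t => f (t, z.2)) z.1.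
Definition pd2 (f : R * R -> R) : R * R -> R :=
  fun z => derive1 (fun t => f (z.1, t)) z.2.

Definition iter_pd (s : seq bool) (f : R * R -> R) : R * R -> R :=
  foldr (fun (b : bool) g => if b then pd1 g else pd2 g) f s.

Definition smooth2 (f : R * R -> R) : Prop :=
  forall s : seq bool, continuous (iter_pd s f) /\
    (forall z : R * R, derivable (fun t => iter_pd s f (t, z.2)) z.1 1 /\
                       derivable (fun t => iter_pd s f (z.1, t)) z.2 1).

Definition test_fun (phi : R * R -> R) : Prop :=
  smooth2 phi /\
  exists K : set (R * R), compact K /\ K `<=` Omega /\
    (forall z, ~ K z -> phi z = 0).

Definition weak_pd1 (u g : R * R -> R) : Prop :=
  forall phi, test_fun phi ->
    leb2.-integrable Omega (fun z => (g z * phi z)%:E) /\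
    (\int[leb2]_(z in Omega) (u z * pd1 phi z)%:E =
       - \int[leb2]_(z in Omega) (g z * phi z)%:E)%E.
Definition weak_pd2 (u g : R * R -> R) : Prop :=
  forall phi, test_fun phi ->
    leb2.-integrable Omega (fun z => (g z * phi z)%:E) /\
    (\int[leb2]_(z in Omega) (u z * pd2 phi z)%:E =
       - \int[leb2]_(z in Omega) (g z * phi z)%:E)%E.

Definition wL2 (w : R * R -> R) (f : R * R -> R) : Prop :=
  measurable_fun Omega f /\
  (\int[leb2]_(z in Omega) (w z * f z ^+ 2)%:E < +oo)%E.

Definition in_H1h (h : R -> R) (u g1 g2 : R * R -> R) : Prop :=
  wL2 (fun _ => 1) u /\ weak_pd1 u g1 /\ weak_pd2 u g2 /\
  wL2 (fun _ => 1) g1 /\ wL2 (fun z => h z.1) g2.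

Definition H1h_norm (h : R -> R) (u g1 g2 : R * R -> R) : R :=
  Num.sqrt (fine (\int[leb2]_(z in Omega) (u z ^+ 2)%:E +
                  \int[leb2]_(z in Omega) (g1 z ^+ 2)%:E +
                  \int[leb2]_(z in Omega) (h z.1 * g2 z ^+ 2)%:E)%E).

Definition W11_norm (u g1 g2 : R * R -> R) : \bar R :=
  (\int[leb2]_(z in Omega) `|u z|%:E + \int[leb2]_(z in Omega) `|g1 z|%:E +
   \int[leb2]_(z in Omega) `|g2 z|%:E)%E.

(* h in C^1(0,1]: differentiable on (0,1) with continuous derivative on (0,1],
   one-sided at 1 (derivative extends continuously to 1, h left-continuous at 1) *)
Definition C1_0_1 (h : R -> R) : Prop :=
  (forall t, 0 < t < 1 -> derivable h t 1) /\
  {within `]0, 1[, continuous (derive1 h)} /\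
  cvg (derive1 h x @[x --> (1:R)^'-]) /\
  h x @[x --> (1:R)^'-] --> h 1.

End Defs.

(* Main.v *)
Require Import Defs.
From HB Require Import structures.
From mathcomp Require Import all_boot all_order all_algebra.
From mathcomp Require Import all_classical all_reals all_analysis.
From mathcomp Require Import ring lra.
Import Order.TTheory GRing.Theory Num.Theory.
Import numFieldNormedType.Exports.
Import measurable_realfun.
Local Open Scope classical_set_scope.
Local Open Scope ring_scope.
Lemma real_key (R : realType) (x Fa Bb N : R) : 0 <= x -> 0 <= Fa -> Fa <= N -> 0 <= Bb ->
  (forall t, 0 < t -> x <= t / 2 * Fa + (2 * t)^-1 * Bb) -> x <= (1 + Bb) / 2 * Num.sqrt N.
Proof.
move=> x0 Fa0 FaN Bb0 H.
have N0 : 0 <= N by apply: le_trans FaN.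
have [Np|] := ltP 0 N.
  set s := Num.sqrt N.
  have s0 : 0 < s by rewrite sqrtr_gt0.
  have ss : s * s = N by rewrite -expr2 sqr_sqrtr.
  have := H s^-1; rewrite invr_gt0 => /(_ s0).
  have e1 : (2 * s^-1)^-1 = s / 2 by rewrite invfM invrK mulrC.
  have e2 : s^-1 * Fa <= s.
    apply: (@le_trans _ _ (s^-1 * N)); first by rewrite ler_wpM2l // invr_ge0 ltW.
    by rewrite -ss mulrA mulVf ?mul1r // gt_eqF.
  rewrite e1 => h1.
  have e3 : s^-1 / 2 * Fa = (s^-1 * Fa) / 2 by rewrite mulrAC.
  rewrite e3 in h1.
  have : 0 <= s * Bb by rewrite mulr_ge0 // ltW.
  nra.
move=> N0'.
have NE : N = 0 by apply/eqP; rewrite eq_le N0' N0.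
have FaE : Fa = 0 by apply/eqP; rewrite eq_le Fa0 andbT -NE.
rewrite NE sqrtr0 mulr0.
rewrite leNgt; apply/negP => xp.
have tp : 0 < (Bb + 1) / x by rewrite divr_gt0 // ltr_pwDr.
have := H _ tp; rewrite FaE mulr0 add0r.
have e : (2 * ((Bb + 1) / x))^-1 * Bb * (2 * (Bb + 1)) = x * Bb.
  field; apply/andP; split; rewrite ?gt_eqF //; lra.
move=> h.
have : x * (2 * (Bb + 1)) <= (2 * ((Bb + 1) / x))^-1 * Bb * (2 * (Bb + 1)).
  by rewrite ler_wpM2r //; lra.
rewrite e; nra.
Qed.

Lemma pw_key (R : realType) (f a b t : R) : 0 <= a -> 0 <= b -> f ^+ 2 <= a * b -> 0 < t ->
  `|f| <= t / 2 * a + (2 * t)^-1 * b.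
Proof.
move=> a0 b0 fab t0.
set y := `|f|.
have y0 : 0 <= y by rewrite normr_ge0.
have yy : y ^+ 2 = f ^+ 2 by rewrite /y real_normK // num_real.
set p := t * a. set q := t^-1 * b.
have p0 : 0 <= p by rewrite mulr_ge0 // ltW.
have q0 : 0 <= q by rewrite mulr_ge0 // invr_ge0 ltW.
have pq : p * q = a * b by rewrite /p /q mulrACA (mulrC a) mulrA mulfV ?mul1r ?gt_eqF // mulrC.
have -> : t / 2 * a + (2 * t)^-1 * b = (p + q) / 2.
  rewrite /p /q invfM; field.
  by rewrite gt_eqF.
have h1 : y ^+ 2 <= p * q by rewrite yy pq.
rewrite leNgt; apply/negP => h.
have h2 : ((p + q) / 2) ^+ 2 < y ^+ 2.
  rewrite ltr_pXn2r // ?nnegrE //; lra.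
have : 0 <= (p - q) ^+ 2 by rewrite sqr_ge0.
nra.
Qed.

Lemma int_key d (T : measurableType d) (R : realType) (mu : {measure set T -> \bar R})
  (D : set T) (f a b : T -> R) (Fa Bb N : R) :
  measurable D -> measurable_fun D f -> measurable_fun D a -> measurable_fun D b ->
  (forall z, D z -> 0 <= a z) -> (forall z, D z -> 0 <= b z) ->
  (forall z, D z -> f z ^+ 2 <= a z * b z) ->
  (\int[mu]_(z in D) (a z)%:E <= Fa%:E)%E -> (\int[mu]_(z in D) (b z)%:E <= Bb%:E)%E ->
  Fa <= N ->
  mu.-integrable D (EFin \o f) /\
  (\int[mu]_(z in D) `|f z|%:E <= ((1 + Bb) / 2 * Num.sqrt N)%:E)%E.
Proof.
move=> mD mf ma mb a0 b0 fab aF bB FaN.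
have Fa0 : 0 <= Fa.
  by rewrite -lee_fin; apply: le_trans aF; apply: integral_ge0 => z Dz; rewrite lee_fin a0.
have Bb0 : 0 <= Bb.
  by rewrite -lee_fin; apply: le_trans bB; apply: integral_ge0 => z Dz; rewrite lee_fin b0.
have mnf : measurable_fun D (fun z => `|f z|%:E).
  apply/measurable_EFinP; exact: measurableT_comp.
have bnd : forall t, 0 < t ->
    (\int[mu]_(z in D) `|f z|%:E <= (t / 2 * Fa + (2 * t)^-1 * Bb)%:E)%E.
  move=> t t0.
  have t1 : 0 <= t / 2 by rewrite divr_ge0 // ltW.
  have t2 : 0 <= (2 * t)^-1 by rewrite invr_ge0 mulr_ge0 // ltW.
  apply: (@le_trans _ _ (\int[mu]_(z in D) ((t / 2 * a z + (2 * t)^-1 * b z)%:E))%E).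
    apply: ge0_le_integral => //.
    - apply/measurable_EFinP => /=.
      exact: (measurable_funD (measurable_funM (measurable_cst _) ma) (measurable_funM (measurable_cst _) mb)).
    - by move=> z Dz; rewrite lee_fin; apply: pw_key; [exact: a0|exact: b0|exact: fab|].
  under eq_integral do rewrite EFinD (EFinM (t / 2)) (EFinM ((2 * t)^-1)).
  rewrite ge0_integralD //; first last.
  - apply: emeasurable_funM; [exact: measurable_cst|exact/measurable_EFinP].
  - by move=> z Dz; rewrite mule_ge0 // lee_fin b0.
  - apply: emeasurable_funM; [exact: measurable_cst|exact/measurable_EFinP].
  - by move=> z Dz; rewrite mule_ge0 // lee_fin a0.
  rewrite ge0_integralZl_EFin //; last exact/measurable_EFinP.
  rewrite ge0_integralZl_EFin //; last exact/measurable_EFinP.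
  by rewrite EFinD !EFinM; apply: leeD; apply: lee_wpmul2l => //.
have fin : (\int[mu]_(z in D) `|f z|%:E)%E \is a fin_num.
  rewrite ge0_fin_numE; last by apply: integral_ge0 => z _; rewrite lee_fin.
  by apply: (le_lt_trans (bnd 1 ltr01)); rewrite ltry.
split.
  apply/integrableP; split; first exact/measurable_EFinP.
  rewrite (eq_integral (fun z => `|f z|%:E)%E); last by move=> z _.
  by rewrite ltey_eq fin.
rewrite -(fineK fin) lee_fin.
apply: real_key.
- by rewrite fine_ge0 // integral_ge0 // => z _; rewrite lee_fin.
- exact: Fa0.
- exact: FaN.
- exact: Bb0.
- by move=> t t0; rewrite -lee_fin fineK // bnd.
Qed.

Section Main.
Context {R : realType}.

Lemma mOmega : measurable (@Omega R).
Proof. by apply: measurableX; exact: measurable_itv. Qed.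

Lemma Omega_in {z : R * R} : @Omega R z -> (0 < z.1 < 1) /\ (0 < z.2 < 1).
Proof. by case=> /=; rewrite !in_itv /= => -> ->. Qed.

Lemma leb2_Omega : @leb2 R (@Omega R) = 1%E.
Proof.
rewrite /leb2 /Omega product_measure1E; try exact: measurable_itv.
have L : lebesgue_measure (`]0, 1[%classic : set R) = 1%E.
  by rewrite lebesgue_measure_itv /= lte_fin ltr01 oppr0 adde0.
transitivity (1%E * 1%E : \bar R)%E; last by rewrite mule1.
by congr (_ * _)%E; exact: L.
Qed.

Lemma ball_Omega : eball (2^-1, 2^-1) (Num.sqrt 2) `&` @Omega R = @Omega R.
Proof.
apply/seteqP; split => z; first by case.
move=> Oz; split => //; have [/andP[a b] /andP[c e]] := Omega_in Oz.
rewrite /eball /= sqr_sqrtr //.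
nra.
Qed.

Lemma mh (h : R -> R) : (forall t, 0 < t < 1 -> derivable h t 1) ->
  (forall t, 0 < t <= 1 -> 0 < h t) ->
  measurable_fun (@Omega R) (fun z => h z.1) /\
  measurable_fun (@Omega R) (fun z => (h z.1)^-1).
Proof.
move=> hd hp.
have ch : {in `]0, 1[%classic, continuous h}.
  move=> x; rewrite inE /= in_itv /= => xin.
  by apply: differentiable_continuous; rewrite -derivable1_diffP; exact: hd.
have chV : {in `]0, 1[%classic, continuous (fun t => (h t)^-1)}.
  move=> x xin; apply: continuousV; last exact: ch.
  move: xin; rewrite inE /= in_itv /= => /andP[a b].
  by rewrite gt_eqF // hp // a ltW.
have op : open (`]0, 1[%classic : set R) by exact: interval_open.
have mfst : measurable_fun (@Omega R) fst.
  exact: (measurable_funS measurableT (@subsetT _ _) measurable_fst).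
have sub : fst @` (@Omega R) `<=` `]0, 1[%classic by move=> _ [z [Oz _] <-].
split.
  exact: (measurable_comp (measurable_itv _) sub (open_continuous_measurable_fun op ch) mfst).
exact: (measurable_comp (measurable_itv _) sub (open_continuous_measurable_fun op chV) mfst).
Qed.

End Main.

Lemma fin_int d (T : measurableType d) (R : realType) (mu : {measure set T -> \bar R})
  (D : set T) (f : T -> R) : (forall z, D z -> 0 <= f z) ->
  (\int[mu]_(z in D) (f z)%:E < +oo)%E ->
  exists F : R, (\int[mu]_(z in D) (f z)%:E = F%:E)%E /\ 0 <= F.
Proof.
move=> f0 fi.
have g0 : (0 <= \int[mu]_(z in D) (f z)%:E)%E by apply: integral_ge0 => z Dz; rewrite lee_fin f0.
exists (fine (\int[mu]_(z in D) (f z)%:E)); split; last exact: fine_ge0.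
by rewrite fineK // ge0_fin_numE.
Qed.

Theorem lemma2p3 (R : realType) (h : R -> R) :
  (exists M : R, forall t, 0 <= t <= 1 -> `|h t| <= M) ->
  h 0 = 0 ->
  (forall t, 0 < t <= 1 -> 0 < h t) ->
  C1_0_1 h ->
  (exists (C theta : R), 0 < C /\ 0 < theta < 1 /\
     forall (x : R * R) (r : R), @Omega R x -> 0 < r <= diamOmega R ->
       (\int[@leb2 R]_(y in eball x r `&` @Omega R) ((h y.1)^-1)%:E <=
        (C * (fine (@leb2 R (eball x r `&` @Omega R))) `^ theta)%:E)%E) ->
  exists K : R, 0 < K /\
    forall u g1 g2 : R * R -> R, in_H1h h u g1 g2 ->
      (@leb2 R).-integrable (@Omega R) (EFin \o u) /\
      (@leb2 R).-integrable (@Omega R) (EFin \o g1) /\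
      (@leb2 R).-integrable (@Omega R) (EFin \o g2) /\
      (W11_norm u g1 g2 <= (K * H1h_norm h u g1 g2)%:E)%E.

Proof.
move=> _ h0 hp [hd _] [C [th [C0 [th01 hball]]]].
have [mh1 mhV] := mh _ hd hp.
have hO : forall z, @Omega R z -> 0 < h z.1.
  by move=> z /Omega_in [/andP[a b] _]; rewrite hp // a ltW.
have [A [eA A0]] : exists A : R, (\int[@leb2 R]_(z in @Omega R) ((h z.1)^-1)%:E = A%:E)%E /\ 0 <= A.
  apply: fin_int; first by move=> z Oz; rewrite invr_ge0 ltW // hO.
  have O12 : @Omega R (2^-1, 2^-1).
    by split; rewrite /= in_itv /=; apply/andP; split; lra.
  have r0 : (0 : R) < Num.sqrt (2 : R) <= Num.sqrt (2 : R) by rewrite lexx andbT sqrtr_gt0 ltr0n.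
  have := hball _ _ O12 r0; rewrite ball_Omega => hb.
  by apply: le_lt_trans hb _; rewrite ltry.
exists (2 + (1 + A) / 2); split; first by lra.
move=> u g1 g2 [[mu Iu] [_ [_ [[mg1 Ig1] [mg2 Ig2]]]]].
have mu2 := measurable_funX 2 mu.
have mg12 := measurable_funX 2 mg1.
have mg22 := measurable_funX 2 mg2.
have [U [eU U0]] : exists U : R, (\int[@leb2 R]_(z in @Omega R) (u z ^+ 2)%:E = U%:E)%E /\ 0 <= U.
  apply: fin_int; first by move=> z _; exact: sqr_ge0.
  suff -> : (\int[@leb2 R]_(z in @Omega R) (u z ^+ 2)%:E = \int[@leb2 R]_(z in @Omega R) (1 * u z ^+ 2)%:E)%E by [].
  by apply: eq_integral => z _; rewrite mul1r.
have [G [eG G0]] : exists G : R, (\int[@leb2 R]_(z in @Omega R) (g1 z ^+ 2)%:E = G%:E)%E /\ 0 <= G.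
  apply: fin_int; first by move=> z _; exact: sqr_ge0.
  suff -> : (\int[@leb2 R]_(z in @Omega R) (g1 z ^+ 2)%:E = \int[@leb2 R]_(z in @Omega R) (1 * g1 z ^+ 2)%:E)%E by [].
  by apply: eq_integral => z _; rewrite mul1r.
have [H [eH H0]] : exists H : R, (\int[@leb2 R]_(z in @Omega R) (h z.1 * g2 z ^+ 2)%:E = H%:E)%E /\ 0 <= H.
  apply: fin_int; last exact: Ig2.
  by move=> z Oz; rewrite mulr_ge0 ?sqr_ge0 // ltW // hO.
have eN : H1h_norm h u g1 g2 = Num.sqrt (U + G + H).
  by rewrite /H1h_norm eU eG eH /=.
have i1 : (\int[@leb2 R]_(z in @Omega R) (1%:E) <= 1%:E)%E.
  rewrite integral_cst; last exact: mOmega.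
  change (1%:E * @leb2 R (@Omega R) <= 1%:E)%E.
  by rewrite leb2_Omega mule1.

have eq_leW : forall x y : \bar R, x = y -> (x <= y)%E by move=> x y xy; rewrite xy.
have fab1 : forall x : R, x ^+ 2 <= x ^+ 2 * 1 by move=> x; rewrite mulr1.
have UN : U <= U + G + H by lra.
have [iu bu] := @int_key _ _ R (@leb2 R) (@Omega R) u (fun z => u z ^+ 2) (fun _ => 1) U 1 (U + G + H) mOmega mu mu2 (measurable_cst _)
   (fun z _ => sqr_ge0 (u z)) (fun z _ => ler01) (fun z _ => fab1 (u z))
   (eq_leW _ _ eU) i1 UN.
have GN : G <= U + G + H by lra.
have [ig1 bg1] := @int_key _ _ R (@leb2 R) (@Omega R) g1 (fun z => g1 z ^+ 2) (fun _ => 1) G 1 (U + G + H) mOmega mg1 mg12 (measurable_cst _)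
   (fun z _ => sqr_ge0 (g1 z)) (fun z _ => ler01) (fun z _ => fab1 (g1 z))
   (eq_leW _ _ eG) i1 GN.
have HN : H <= U + G + H by lra.
have mhg := measurable_funM mh1 mg22.
have a0 : forall z, @Omega R z -> 0 <= h z.1 * g2 z ^+ 2.
  by move=> z Oz; rewrite mulr_ge0 ?sqr_ge0 // ltW // hO.
have b0 : forall z, @Omega R z -> 0 <= (h z.1)^-1.
  by move=> z Oz; rewrite invr_ge0 ltW // hO.
have fab : forall z, @Omega R z -> g2 z ^+ 2 <= h z.1 * g2 z ^+ 2 * (h z.1)^-1.
  by move=> z Oz; rewrite mulrAC mulfV ?mul1r // gt_eqF // hO.
have [ig2 bg2] := @int_key _ _ R (@leb2 R) (@Omega R) g2 (fun z => h z.1 * g2 z ^+ 2) (fun z => (h z.1)^-1) H A (U + G + H) mOmega mg2 mhg mhV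
   a0 b0 fab (eq_leW _ _ eH) (eq_leW _ _ eA) HN.
split => //; split => //; split => //.
rewrite /W11_norm eN.
apply: le_trans (leeD (leeD bu bg1) bg2) _.
rewrite -!EFinD lee_fin -!mulrDl ler_wpM2r ?sqrtr_ge0 //.
lra.
Qed.
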